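(* There exists a super-core of some non-shrinking function $f:\{0,1\}^n\to\{0,1\}^{m(n)}$ (i.e. $m(n)\ge n$ for all $n$) computable by polynomial-size circuits if and only if there exists a super-bit $g:\{0,1\}^n\to\{0,1\}^{n+1}$.
   Context: $U_k$ is uniform on $\{0,1\}^k$. A generator $g:\{0,1\}^n\to\{0,1\}^{n+1}$ computable by polynomial-size circuits is a super-bit if for every nondeterministic polynomial-size circuit family $D$ (accepting iff some witness gives output 1), every polynomial $p$ and all sufficiently large $n$, $\Pr[D(U_{n+1})=1]-\Pr[D(g(U_n))=1]<1/p(n)$. A predicate $b$ computable by polynomial-size circuits is a super-core of $f:\{0,1\}^n\to\{0,1\}^{m(n)}$ if there do not exist a nondeterministic polynomial-size circuit family $\mathcal{A}_1$, a co-nondeterministic polynomial-size circuit family $\mathcal{A}_2$ (rejecting iff some witness gives output 0), a polynomial $p$ and infinitely many $n$ such that either $\Pr_{x\in\{0,1\}^n}[\mathcal{A}_1(f(x),1^n)=b(x)=0]+\tfrac12\Pr_{y\in\{0,1\}^{m(n)}}[\mathcal{A}_1(y,1^n)=1]\ge \tfrac12+\tfrac1{p(n)}$ or $\Pr_{x}[\mathcal{A}_2(f(x),1^n)=b(x)=1]+\tfrac12\Pr_{y}[\mathcal{A}_2(y,1^n)=0]\ge \tfrac12+\tfrac1{p(n)}$. *)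

(* Defs.v *)
From mathcomp Require Import all_boot all_algebra.
Set Implicit Arguments. Unset Strict Implicit. Unset Printing Implicit Defensive.
Import GRing.Theory Num.Theory.

(* Wires 0..k-1 are the inputs; gate number j produces wire k+j and may only
   read earlier wires (reading a non-existent wire yields false). *)
Inductive gate : Type :=
| GAnd of nat & nat
| GOr  of nat & nat
| GNot of nat.

Definition eval_gate (w : seq bool) (g : gate) : bool :=
  match g with
  | GAnd i j => nth false w i && nth false w j
  | GOr i j  => nth false w i || nth false w j
  | GNot i   => ~~ nth false w i
  end.

Record circuit : Type := Circuit { gates : seq gate; outs : seq nat }.

Definition wires (c : circuit) (x : seq bool) : seq bool :=
  foldl (fun w g => rcons w (eval_gate w g)) x (gates c).

Definition eval (c : circuit) (x : seq bool) : seq bool :=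
  [seq nth false (wires c x) i | i <- outs c].

Definition out1 (c : circuit) (x : seq bool) : bool := nth false (eval c x) 0.

Definition csize (c : circuit) : nat := (size (gates c) + size (outs c))%N.

(* polynomial bounds c * n^k + c (every polynomial is dominated by one) *)
Definition pbound (c k n : nat) : nat := (c * n ^ k + c)%N.

Definition poly_size (C : nat -> circuit) : Prop :=
  exists c k, forall n, (csize (C n) <= pbound c k n)%N.

Definition poly_computable (m : nat -> nat)
    (f : forall n, n.-tuple bool -> (m n).-tuple bool) : Prop :=
  exists C : nat -> circuit, poly_size C /\
    forall n (x : n.-tuple bool), eval (C n) x = tval (f n x).

Definition pred_poly_computable (b : forall n, n.-tuple bool -> bool) : Prop :=
  exists C : nat -> circuit, poly_size C /\
    forall n (x : n.-tuple bool), eval (C n) x = [:: b n x].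

(* the circuit of index n reads its input followed by a witness of length
   ndw n *)
Record ndfam : Type := NDFam { ndc : nat -> circuit; ndw : nat -> nat }.

Definition nd_poly (A : ndfam) : Prop :=
  exists c k, forall n, (csize (ndc A n) + ndw A n <= pbound c k n)%N.

Definition nd_out (A : ndfam) (n : nat) (y : seq bool) : bool :=
  [exists u : (ndw A n).-tuple bool, out1 (ndc A n) (y ++ tval u)].

Definition co_out (A : ndfam) (n : nat) (y : seq bool) : bool :=
  [forall u : (ndw A n).-tuple bool, out1 (ndc A n) (y ++ tval u)].

Definition prob (n : nat) (P : n.-tuple bool -> bool) : rat :=
  (#|[set x : n.-tuple bool | P x]|%:R / (2 ^ n)%:R)%R.
Arguments prob n P : clear implicits.

Definition super_bit (g : forall n, n.-tuple bool -> (n.+1).-tuple bool) : Prop :=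
  poly_computable (m := S) g /\
  forall D : ndfam, nd_poly D ->
  forall c k : nat, (0 < c)%N ->
  exists N : nat, forall n : nat, (N <= n)%N ->
    (prob (n.+1) (fun y => nd_out D n (tval y))
     - prob n (fun x => nd_out D n (tval (g n x))) < 1 / (pbound c k n)%:R)%R.

Definition super_core (m : nat -> nat)
    (f : forall n, n.-tuple bool -> (m n).-tuple bool)
    (b : forall n, n.-tuple bool -> bool) : Prop :=
  pred_poly_computable b /\
  ~ (exists (A1 A2 : ndfam) (c k : nat),
       nd_poly A1 /\ nd_poly A2 /\ (0 < c)%N /\
       forall N : nat, exists2 n : nat, (N <= n)%N &
         ((prob n (fun x => ~~ nd_out A1 n (tval (f n x)) && ~~ b n x)
           + 1 / 2 * prob (m n) (fun y => nd_out A1 n (tval y))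
           >= 1 / 2 + 1 / (pbound c k n)%:R)%R
          \/
          (prob n (fun x => co_out A2 n (tval (f n x)) && b n x)
           + 1 / 2 * prob (m n) (fun y => ~~ co_out A2 n (tval y))
           >= 1 / 2 + 1 / (pbound c k n)%:R)%R)).

(* Main.v *)
Require Import Defs.
From mathcomp Require Import all_boot all_algebra.
From mathcomp Require Import zify ring lra order.
From Stdlib Require Import Classical.
Set Implicit Arguments. Unset Strict Implicit. Unset Printing Implicit Defensive.
Import Order.TTheory GRing.Theory Num.Theory.

Definition step (w : seq bool) (g : gate) := rcons w (eval_gate w g).

Lemma wiresE c x : wires c x = foldl step x (gates c).
Proof. by []. Qed.

Lemma size_foldl w gs : size (foldl step w gs) = size w + size gs.
Proof.
elim: gs w => [|g gs IH] w /=; first by rewrite addn0.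
by rewrite IH /step size_rcons addSnnS.
Qed.

Lemma size_wires c x : size (wires c x) = size x + size (gates c).
Proof. exact: size_foldl. Qed.

Definition oidx (c : circuit) (L : nat) : nat :=
  if outs c is i :: _ then i else L + size (gates c).

Lemma out1_wires c x : out1 c x = nth false (wires c x) (oidx c (size x)).
Proof.
rewrite /out1 /eval /oidx; case: (outs c) => [|i o] //=.
by rewrite nth_default // size_wires.
Qed.

Inductive src := SVar of nat | SConst of bool.
Definition srcgate (K : nat) (e : src) : gate :=
  match e with
  | SVar i => GAnd i i
  | SConst false => GAnd K K
  | SConst true => GNot K
  end.
Definition srcval (x : seq bool) (e : src) : bool :=
  match e with SVar i => nth false x i | SConst b => b end.
Definition srcok (L : nat) (e : src) : bool :=
  match e with SVar i => i < L | SConst _ => true end.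

Lemma foldl_src (x : seq bool) K sg rest :
  all (srcok (size x)) sg -> size x + size rest + size sg <= K ->
  foldl step (x ++ rest) (map (srcgate K) sg) = x ++ rest ++ map (srcval x) sg.
Proof.
elim: sg rest => [|e sg IH] rest /=; first by rewrite cats0.
move=> /andP[ok oks] hK.
have -> : step (x ++ rest) (srcgate K e) = x ++ rcons rest (srcval x e).
  rewrite /step rcons_cat; congr (_ ++ _); congr rcons.
  case: e ok hK => [i|[]] /= ok hK.
  - by rewrite nth_cat ok andbb.
  - by rewrite nth_default ?andbb //; rewrite size_cat; lia.
  - by rewrite nth_default ?andbb //; rewrite size_cat; lia.
rewrite IH //; first by rewrite cat_rcons.
by rewrite size_rcons; lia.
Qed.

Definition shiftg (s : nat) (g : gate) : gate :=
  match g with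
  | GAnd i j => GAnd (s + i) (s + j)
  | GOr i j => GOr (s + i) (s + j)
  | GNot i => GNot (s + i)
  end.

Lemma nth_shift (x w : seq bool) i : nth false (x ++ w) (size x + i) = nth false w i.
Proof. by rewrite nth_cat ltnNge leq_addr /= addKn. Qed.

Lemma foldl_shift (x w : seq bool) gs :
  foldl step (x ++ w) (map (shiftg (size x)) gs) = x ++ foldl step w gs.
Proof.
elim: gs w => [|g gs IH] w //=.
have -> : step (x ++ w) (shiftg (size x) g) = x ++ step w g.
  by rewrite /step rcons_cat; case: g => * /=; rewrite !nth_shift.
exact: IH.
Qed.

Definition basegates (s : nat) (sg : seq src) (c : circuit) : seq gate :=
  map (srcgate (s + size sg)) sg ++ map (shiftg s) (gates c).

Lemma foldl_base (x : seq bool) sg c :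
  all (srcok (size x)) sg ->
  foldl step x (basegates (size x) sg c) = x ++ wires c (map (srcval x) sg).
Proof.
move=> ok; rewrite /basegates foldl_cat.
have := @foldl_src x (size x + size sg) sg [::] ok.
rewrite cats0 /= addn0 => -> //.
by rewrite foldl_shift.
Qed.

Local Open Scope ring_scope.
Definition psum n (P : n.-tuple bool -> bool) : rat := \sum_(x : n.-tuple bool) (P x)%:R.

Lemma probE n P : prob n P = psum P / (2 ^ n)%:R.
Proof.
rewrite /prob /psum cardsE -sum1_card natr_sum big_mkcond /=.
by congr (_ / _); apply: eq_bigr => x _; rewrite unfold_in; case: (P x).
Qed.

Lemma psum1 n : psum (fun _ : n.-tuple bool => true) = (2 ^ n)%:R.
Proof.
by rewrite /psum sumr_const card_tuple card_bool -[LHS]mulr_natl mulr1.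
Qed.

Lemma psumN n (P : n.-tuple bool -> bool) :
  psum (fun x => ~~ P x) = (2 ^ n)%:R - psum P.
Proof.
rewrite -psum1 /psum -sumrB; apply: eq_bigr => x _; by case: (P x); rewrite ?subrr ?subr0.
Qed.

Lemma psum_split n (P c : n.-tuple bool -> bool) :
  psum P = psum (fun x => P x && c x) + psum (fun x => P x && ~~ c x).
Proof.
rewrite /psum -big_split; apply: eq_bigr => x _ /=.
by case: (P x); case: (c x); rewrite ?add0r ?addr0.
Qed.

Lemma psum_ext n (P Q : n.-tuple bool -> bool) : (forall x, P x = Q x) -> psum P = psum Q.
Proof. by move=> h; apply: eq_bigr => x _; rewrite h. Qed.

Lemma psum_ge0 n (P : n.-tuple bool -> bool) : 0 <= psum P.
Proof. by apply: sumr_ge0 => x _; case: (P x). Qed.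

Lemma sum_rcons n (F : seq bool -> rat) :
  \sum_(Y : n.+1.-tuple bool) F Y =
  \sum_(z : n.-tuple bool) (F (rcons z false) + F (rcons z true)).
Proof.
pose h (p : n.-tuple bool * bool) : n.+1.-tuple bool := [tuple of rcons p.1 p.2].
pose hi (Y : n.+1.-tuple bool) : n.-tuple bool * bool :=
  ([tuple of belast (thead Y) (behead_tuple Y)], last (thead Y) (behead Y)).
have hK : cancel h hi.
  move=> [z r]; rewrite /h /hi /=.
  set Y := [tuple of rcons z r].
  have e : thead Y :: behead Y = rcons z r.
    exact: esym (congr1 val (tuple_eta Y)).
  move: e; rewrite lastI => /rcons_inj [e1 e2].
  congr pair; last by [].
  by apply: val_inj => /=.
have hiK : cancel hi h.
  move=> Y; apply: val_inj; rewrite /h /hi /=.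
  rewrite -lastI; exact: esym (congr1 val (tuple_eta Y)).
rewrite (reindex h) /=; last by exists hi; [move=> p _; apply: hK | move=> p _; apply: hiK].
rewrite [RHS](eq_bigr (fun z : n.-tuple bool => \sum_(r : bool) F (rcons z r))); last by move=> z _; rewrite big_bool addrC.
by rewrite pair_big.
Qed.

Lemma psum_rcons n (Q : seq bool -> bool) :
  psum (fun Y : n.+1.-tuple bool => Q Y) =
  psum (fun z : n.-tuple bool => Q (rcons z false)) + psum (fun z : n.-tuple bool => Q (rcons z true)).
Proof. by rewrite /psum (sum_rcons _ (fun s => (Q s)%:R)) big_split. Qed.

Lemma psum_take0 d n (Q : seq bool -> bool) :
  psum (fun y : (d + n).-tuple bool => Q (take n y)) = (2 ^ d)%:R * psum (fun z : n.-tuple bool => Q z).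
Proof.
elim: d => [|d IH].
  rewrite expn0 mul1r; apply: psum_ext => y /=.
  by rewrite take_oversize // size_tuple.
rewrite (psum_rcons _ (fun s => Q (take n s))).
have e : forall r (y : (d + n).-tuple bool), take n (rcons y r) = take n y.
  by move=> r y; rewrite -cats1 takel_cat // size_tuple leq_addl.
rewrite (psum_ext (Q := fun y : (d+n).-tuple bool => Q (take n y))); last by move=> y; rewrite e.
rewrite (psum_ext (P := fun y : (d+n).-tuple bool => Q (take n (rcons y true)))
                  (Q := fun y : (d+n).-tuple bool => Q (take n y))); last by move=> y; rewrite e.
by rewrite IH expnS natrM -mulrA mulr_natl mulr2n mulrDl mul1r.
Qed.

Lemma prob_take n m (Q : seq bool -> bool) : (n <= m)%N ->
  prob m (fun y => Q (take n y)) = prob n (fun z => Q z).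
Proof.
move=> h; rewrite !probE.
have := psum_take0 (m - n) n Q; rewrite subnK // => ->.
have e : (2 ^ m)%N = (2 ^ (m - n) * 2 ^ n)%N by rewrite -expnD subnK.
rewrite e natrM; field.
by rewrite !pnatr_eq0 !expn_eq0.
Qed.

Lemma prob_rcons n (Q : seq bool -> bool) :
  prob n.+1 (fun Y => Q Y) =
  (prob n (fun z => Q (rcons z false)) + prob n (fun z => Q (rcons z true))) / 2.
Proof.
rewrite !probE psum_rcons expnS natrM; field.
by rewrite pnatr_eq0 expn_eq0.
Qed.

Lemma pow2_neq0 n : (2 ^ n)%:R != 0 :> rat.
Proof. by rewrite pnatr_eq0 expn_eq0. Qed.

Lemma prob_ext n (P Q : n.-tuple bool -> bool) : (forall x, P x = Q x) -> prob n P = prob n Q.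
Proof. by move=> h; rewrite !probE (psum_ext h). Qed.

Lemma prob_true n : prob n (fun _ => true) = 1.
Proof. by rewrite probE psum1 divff // pow2_neq0. Qed.

Lemma probN n (P : n.-tuple bool -> bool) : prob n (fun x => ~~ P x) = 1 - prob n P.
Proof.
rewrite !probE psumN mulrBl divff ?pow2_neq0 //.
Qed.

Lemma pow_le1 n k j : (n ^ k <= n ^ (k + j) + 1)%N.
Proof.
case: n => [|n].
  case: k => [|k]; first by rewrite expn0 leq_addl.
  by rewrite exp0n.
by apply: leq_trans (leq_addr _ _); apply: leq_pexp2l => //; rewrite leq_addr.
Qed.

Lemma n_le_pow n k : (n <= n ^ k.+1)%N.
Proof.
case: n => [|n] //.
by rewrite -{1}(expn1 n.+1); apply: leq_pexp2l.
Qed.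

Lemma pb_mono c1 k1 c2 k2 n : (pbound c1 k1 n <= pbound (2 * (c1 + c2)) (k1 + k2) n)%N.
Proof.
rewrite /pbound; have := pow_le1 n k1 k2.
move: (n ^ k1)%N (n ^ (k1 + k2))%N => a b h.
nia.
Qed.

Lemma pb_lin c k n : (n + 2 * pbound c k n + 4 <= pbound (4 * c + 5) (k + 1) n)%N.
Proof.
rewrite /pbound addn1; have := pow_le1 n k 1; have := n_le_pow n k.
rewrite !addn1.
move: (n ^ k)%N (n ^ k.+1)%N => a b h1 h2.
nia.
Qed.

Lemma exists_orr (T : finType) (x0 : T) (P : pred T) r :
  [exists u, P u || r] = [exists u, P u] || r.
Proof.
case: r.
  by rewrite orbT; apply/existsP; exists x0; rewrite orbT.
by rewrite orbF; apply: eq_existsb => u; rewrite orbF.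
Qed.

Definition hg (t : bool) (i : nat) : gate := if t then GNot i else GAnd i i.

Definition Dcirc (n w : nat) (C : circuit) (t : bool) : circuit :=
  let s := (n.+1 + w)%N in
  let sg := map SVar (iota 0 n ++ iota n.+1 w) in
  let W := (s + (n + w) + size (gates C))%N in
  Circuit (basegates s sg C ++ [:: hg t (s + oidx C (n + w)); hg t n; GOr W W.+1]) [:: W.+2].

Lemma foldl_base' (x : seq bool) s sg c : size x = s ->
  all (srcok (size x)) sg ->
  foldl step x (basegates s sg c) = x ++ wires c (map (srcval x) sg).
Proof. by move=> <-; apply: foldl_base. Qed.

Lemma all_srcok_iota L a k : (a + k <= L)%N -> all (srcok L) (map SVar (iota a k)).
Proof.
elim: k a => [|k IH] a h //=.
rewrite IH ?andbT; last by rewrite addSnnS.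
by apply: leq_trans h; rewrite -addn1 leq_add2l.
Qed.

Lemma tail3 V g1 g2 W : size V = W ->
  nth false (foldl step V [:: g1; g2; GOr W W.+1]) W.+2 =
  eval_gate V g1 || eval_gate (rcons V (eval_gate V g1)) g2.
Proof.
move=> <- /=; rewrite /step /=.
set a := eval_gate V g1; set b := eval_gate (rcons V a) g2.
have h1 : forall (s : seq bool) x, nth false (rcons s x) (size s) = x.
  by move=> s x; rewrite nth_rcons ltnn eqxx.
have h2 : forall (s : seq bool) x i, (i < size s)%N -> nth false (rcons s x) i = nth false s i.
  by move=> s x i hi; rewrite nth_rcons hi.
have e3 : (size V).+2 = size (rcons (rcons V a) b) by rewrite !size_rcons.
rewrite e3 h1 /= h2 ?size_rcons // h1.
by rewrite -(size_rcons V a) h1.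
Qed.

Lemma Dcirc_ok n w C t (z u : seq bool) r : size z = n -> size u = w ->
  out1 (Dcirc n w C t) (rcons z r ++ u) = (out1 C (z ++ u) (+) t) || (r (+) t).
Proof.
move=> hz hu; set x' := rcons z r ++ u.
have hs : size x' = (n.+1 + w)%N by rewrite /x' size_cat size_rcons hz hu.
have hx : map (srcval x') (map SVar (iota 0 n ++ iota n.+1 w)) = z ++ u.
  rewrite -map_comp map_cat.
  have -> : [seq (srcval x' \o SVar) i | i <- iota 0 n] = [seq nth false x' i | i <- iota 0 n] by [].
  have -> : [seq (srcval x' \o SVar) i | i <- iota n.+1 w] = [seq nth false x' i | i <- iota n.+1 w] by [].
  rewrite map_nth_iota0; last by rewrite hs; lia.
  rewrite map_nth_iota; last by rewrite hs; lia.
  rewrite /x' -cats1 -catA takel_cat ?hz // -hz take_size.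
  by rewrite catA drop_size_cat ?size_cat ?addn1 // -hu take_size.
have ok : all (srcok (size x')) (map SVar (iota 0 n ++ iota n.+1 w)).
  rewrite map_cat all_cat !all_srcok_iota // hs; lia.
rewrite {1}/out1 /eval /= wiresE /= foldl_cat (foldl_base' C hs ok) hx /=.
set V := x' ++ wires C (z ++ u).
have hV : size V = (n.+1 + w + (n + w) + size (gates C))%N.
  by rewrite /V size_cat size_wires size_cat hz hu hs addnA.
rewrite tail3 //.
have e1 : nth false V (n.+1 + w + oidx C (n + w)) = out1 C (z ++ u).
  by rewrite -hs /V nth_shift out1_wires size_cat hz hu.
have e2 : forall v, nth false (rcons V v) n = r.
  move=> v; rewrite nth_rcons hV ifT; last lia.
  rewrite /V nth_cat hs ifT; last lia.
  by rewrite /x' nth_cat size_rcons hz ltnSn nth_rcons hz ltnn eqxx.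
by case: t => /=; rewrite e2 e1 ?andbb ?addbT ?addbF.
Qed.

Definition Dfam (c1 : nat -> bool) (A1 A2 : ndfam) : ndfam :=
  NDFam (fun n => Dcirc n (ndw (if c1 n then A1 else A2) n) (ndc (if c1 n then A1 else A2) n) (~~ c1 n))
        (fun n => ndw (if c1 n then A1 else A2) n).

Lemma nd_out_Dfam c1 A1 A2 n (z : seq bool) r : size z = n ->
  nd_out (Dfam c1 A1 A2) n (rcons z r) =
  if c1 n then nd_out A1 n z || r else ~~ co_out A2 n z || ~~ r.
Proof.
move=> hz; rewrite /nd_out /co_out /=; case: (c1 n) => /=.
  rewrite -(exists_orr [tuple of nseq _ false]); apply: eq_existsb => u.
  by rewrite Dcirc_ok ?size_tuple // !addbF.
rewrite negb_forall -(exists_orr [tuple of nseq _ false]); apply: eq_existsb => u.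
by rewrite Dcirc_ok ?size_tuple // !addbT.
Qed.

Lemma csize_Dcirc n w C t : (csize (Dcirc n w C t) + w <= n + 2 * (csize C + w) + 4)%N.
Proof.
rewrite /csize /= size_cat /basegates size_cat !size_map size_cat !size_iota /=.
lia.
Qed.

Lemma nd_poly_Dfam c1 A1 A2 : nd_poly A1 -> nd_poly A2 -> nd_poly (Dfam c1 A1 A2).
Proof.
move=> [a1 [k1 h1]] [a2 [k2 h2]].
exists (4 * (2 * (a1 + a2)) + 5)%N, (k1 + k2 + 1)%N => n.
apply: leq_trans (csize_Dcirc _ _ _ _) _; apply: leq_trans (pb_lin _ _ n).
rewrite leq_add2r leq_add2l leq_mul2l /=.
case: (c1 n).
  by apply: leq_trans (h1 n) (pb_mono _ _ _ _ _).
apply: leq_trans (h2 n) _.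
by rewrite addnC (addnC k1); apply: pb_mono.
Qed.

Lemma take_sz n (t : n.+1.-tuple bool) : size (take n t) == n.
Proof. by rewrite size_take size_tuple ltnSn. Qed.

Definition ftk (g : forall n, n.-tuple bool -> n.+1.-tuple bool) n (x : n.-tuple bool) : n.-tuple bool :=
  Tuple (take_sz (g n x)).
Definition blast (g : forall n, n.-tuple bool -> n.+1.-tuple bool) n (x : n.-tuple bool) : bool :=
  last false (g n x).

Lemma rcons_take_last n (t : seq bool) : size t = n.+1 -> t = rcons (take n t) (last false t).
Proof.
case: t => [|a s] //= [hs].
rewrite lastI -cats1 takel_cat ?size_belast ?hs //.
by rewrite take_oversize ?size_belast ?hs // cats1.
Qed.

Lemma gsplit g n x : tval (g n x) = rcons (ftk g x) (blast g x).
Proof. by rewrite /= /blast -rcons_take_last // size_tuple. Qed.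

Lemma dir1 (g : forall n, n.-tuple bool -> n.+1.-tuple bool) : super_bit g ->
  exists (m : nat -> nat) (f : forall n, n.-tuple bool -> (m n).-tuple bool)
          (b : forall n, n.-tuple bool -> bool),
      (forall n, (n <= m n)%N) /\ poly_computable f /\ super_core f b.
Proof.
move=> [[Cg [[cg [kg hCg]] hev]] hsb].
have hso : forall n, size (outs (Cg n)) = n.+1.
  by move=> n; have := congr1 size (hev n [tuple of nseq n false]); rewrite /eval size_map size_tuple.
exists (fun n => n), (ftk g), (blast g); split; first by [].
split.
  exists (fun n => Circuit (gates (Cg n)) (take n (outs (Cg n)))); split.
    exists cg, kg => n; apply: leq_trans (hCg n).
    by rewrite /csize /= leq_add2l size_take_min geq_minr.
  move=> n x; rewrite /eval /= map_take.
  by have := hev n x; rewrite /eval => ->.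
split.
  exists (fun n => Circuit (gates (Cg n)) [:: nth 0%N (outs (Cg n)) n]); split.
    exists cg, kg => n; apply: leq_trans (hCg n).
    by rewrite /csize /= leq_add2l hso.
  move=> n x; rewrite /eval /=.
  have := congr1 (fun s => nth false s n) (hev n x).
  rewrite gsplit /eval /= (nth_map 0%N) ?hso //.
  rewrite nth_rcons size_take size_tuple ltnSn ltnn eqxx.
  by move=> <-.
move=> [A1 [A2 [c [k [hA1 [hA2 [hc hinf]]]]]]].
pose c1 := fun n => (1 / 2 + 1 / (pbound c k n)%:R <=
   prob n (fun x : n.-tuple bool => ~~ nd_out A1 n (ftk g x) && ~~ blast g x) +
   1 / 2 * prob n (fun y : n.-tuple bool => nd_out A1 n y) :> rat).
have [N hN] := hsb (Dfam c1 A1 A2) (nd_poly_Dfam c1 hA1 hA2) c k hc.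
have [n hn hor] := hinf N.
have hlt := hN n hn.
set D := Dfam c1 A1 A2 in hlt.
have eU : prob n.+1 (fun y : n.+1.-tuple bool => nd_out D n y) =
   (prob n (fun z : n.-tuple bool => nd_out D n (rcons z false)) +
    prob n (fun z : n.-tuple bool => nd_out D n (rcons z true))) / 2 := prob_rcons _ _.
have eP : prob n (fun x => nd_out D n (g n x)) =
    prob n (fun x => nd_out D n (rcons (ftk g x) (blast g x))).
  by apply: prob_ext => x; rewrite gsplit.
rewrite eU eP in hlt.
case hc1 : (c1 n).
  have e1 : prob n (fun z : n.-tuple bool => nd_out D n (rcons z false)) = prob n (fun z => nd_out A1 n z).
    by apply: prob_ext => z; rewrite nd_out_Dfam ?size_tuple // hc1 orbF.
  have e2 : prob n (fun z : n.-tuple bool => nd_out D n (rcons z true)) = 1.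
    by rewrite -(prob_true n); apply: prob_ext => z; rewrite nd_out_Dfam ?size_tuple // hc1 orbT.
  have e3 : prob n (fun x => nd_out D n (rcons (ftk g x) (blast g x))) =
      1 - prob n (fun x => ~~ nd_out A1 n (ftk g x) && ~~ blast g x).
    by rewrite -probN; apply: prob_ext => x; rewrite nd_out_Dfam ?size_tuple // hc1 negb_and !negbK.
  rewrite e1 e2 e3 in hlt.
  have hq := hc1; rewrite /c1 in hq.
  lra.
case: hor => [h|h].
  by move: hc1; rewrite /c1 h.
have e1 : prob n (fun z : n.-tuple bool => nd_out D n (rcons z false)) = 1.
  by rewrite -(prob_true n); apply: prob_ext => z; rewrite nd_out_Dfam ?size_tuple // hc1 orbT.
have e2 : prob n (fun z : n.-tuple bool => nd_out D n (rcons z true)) = prob n (fun z => ~~ co_out A2 n z).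
  by apply: prob_ext => z; rewrite nd_out_Dfam ?size_tuple // hc1 orbF.
have e3 : prob n (fun x => nd_out D n (rcons (ftk g x) (blast g x))) =
    1 - prob n (fun x => co_out A2 n (ftk g x) && blast g x).
  by rewrite -probN; apply: prob_ext => x; rewrite nd_out_Dfam ?size_tuple // hc1 negb_and.
rewrite e1 e2 e3 in hlt.
lra.
Qed.

Lemma prob_split n (P c : n.-tuple bool -> bool) :
  prob n P = prob n (fun x => P x && c x) + prob n (fun x => P x && ~~ c x).
Proof. by rewrite !probE (psum_split P c) mulrDl. Qed.

Lemma pb_lin2 c k n : (2 * n + 2 * pbound c k n + 4 <= pbound (4 * c + 6) (k + 1) n)%N.
Proof.
rewrite /pbound !addn1; have := pow_le1 n k 1; have := n_le_pow n k.
rewrite !addn1.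
move: (n ^ k)%N (n ^ k.+1)%N => a b h1 h2.
nia.
Qed.

Lemma take_prefix gs (w : seq bool) : take (size w) (foldl step w gs) = w.
Proof.
elim: gs w => [|g gs IH] w /=; first by rewrite take_size.
have := IH (step w g); rewrite /step size_rcons => h.
rewrite -(take_takel _ (leqnSn (size w))) h.
by rewrite -cats1 take_size_cat.
Qed.

Definition Acirc (n m w : nat) (C : circuit) (r neg : bool) : circuit :=
  let s := (m + w)%N in
  let sg := map SVar (iota 0 n) ++ SConst r :: map SVar (iota m w) in
  Circuit (basegates s sg C ++ [:: hg neg (s + oidx C (n.+1 + w))])
          [:: (s + (n.+1 + w) + size (gates C))%N].

Lemma Acirc_ok n m w C r neg (y u : seq bool) : (n <= m)%N -> size y = m -> size u = w ->
  out1 (Acirc n m w C r neg) (y ++ u) = out1 C (rcons (take n y) r ++ u) (+) neg.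
Proof.
move=> hnm hy hu; set x' := y ++ u.
have hs : size x' = (m + w)%N by rewrite /x' size_cat hy hu.
set sg := map SVar (iota 0 n) ++ SConst r :: map SVar (iota m w).
have hx : map (srcval x') sg = rcons (take n y) r ++ u.
  rewrite /sg map_cat /= -!map_comp.
  have -> : [seq (srcval x' \o SVar) i | i <- iota 0 n] = [seq nth false x' i | i <- iota 0 n] by [].
  have -> : [seq (srcval x' \o SVar) i | i <- iota m w] = [seq nth false x' i | i <- iota m w] by [].
  rewrite map_nth_iota0; last by rewrite hs; lia.
  rewrite map_nth_iota; last by rewrite hs; lia.
  rewrite /x' takel_cat ?hy // drop_size_cat // -hu take_size.
  by rewrite cat_rcons.
have ok : all (srcok (size x')) sg.
  rewrite /sg all_cat /= !all_srcok_iota // hs; lia.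
have hsz : size (rcons (take n y) r ++ u) = (n.+1 + w)%N.
  by rewrite size_cat size_rcons size_takel ?hy // hu.
rewrite {1}/out1 /eval /= wiresE /= foldl_cat (foldl_base' C hs ok) hx /=.
set V := x' ++ wires C (rcons (take n y) r ++ u).
have hV : size V = (m + w + (n.+1 + w) + size (gates C))%N.
  by rewrite /V size_cat size_wires hsz hs addnA.
rewrite /step /= -hV nth_rcons ltnn eqxx.
have e1 : nth false V (m + w + oidx C (n.+1 + w)) = out1 C (rcons (take n y) r ++ u).
  by rewrite -hs /V nth_shift out1_wires hsz.
by case: neg => /=; rewrite e1 ?andbb ?addbT ?addbF.
Qed.

Definition Afam (n2m : nat -> nat) (D : ndfam) (r neg : bool) : ndfam :=
  NDFam (fun n => Acirc n (n2m n) (ndw D n) (ndc D n) r neg) (ndw D).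

Lemma nd_poly_Afam n2m D r neg : nd_poly D -> nd_poly (Afam n2m D r neg).
Proof.
move=> [a [k h]]; exists (4 * a + 5)%N, (k + 1)%N => n.
apply: leq_trans (pb_lin a k n).
apply: (@leq_trans (n + 2 * (csize (ndc D n) + ndw D n) + 4)); last first.
  by rewrite leq_add2r leq_add2l leq_mul2l h orbT.
rewrite /csize /= size_cat /basegates size_cat !size_map size_cat /= !size_map !size_iota /=.
lia.
Qed.

Definition Gcirc (n : nat) (Cf Cb : circuit) : circuit :=
  let s := (n + size (gates Cf))%N in
  let BIG := (s + n + size (gates Cb))%N in
  Circuit (gates Cf ++ basegates s (map SVar (iota 0 n)) Cb)
    (map (fun i => if (i < s)%N then i else BIG) (take n (outs Cf)) ++ [:: (s + nth 0%N (outs Cb) 0)%N]).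

Lemma Gcirc_ok n Cf Cb (x : seq bool) : size x = n -> size (outs Cb) = 1%N ->
  eval (Gcirc n Cf Cb) x = take n (eval Cf x) ++ [:: nth false (eval Cb x) 0].
Proof.
move=> hx hob.
set s := (n + size (gates Cf))%N.
set WF := wires Cf x.
have hWF : size WF = s by rewrite /WF size_wires hx.
have ok : all (srcok (size WF)) (map SVar (iota 0 n)).
  by apply: all_srcok_iota; rewrite hWF /s; lia.
have hxs : map (srcval WF) (map SVar (iota 0 n)) = x.
  rewrite -map_comp.
  have -> : [seq (srcval WF \o SVar) i | i <- iota 0 n] = [seq nth false WF i | i <- iota 0 n] by [].
  rewrite map_nth_iota0; last by rewrite hWF /s; lia.
  by rewrite -hx /WF wiresE take_prefix.
have hW : wires (Gcirc n Cf Cb) x = WF ++ wires Cb x.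
  by rewrite wiresE /= foldl_cat -wiresE -/WF (foldl_base' Cb hWF ok) hxs.
rewrite /eval hW map_cat; congr (_ ++ _).
  rewrite -map_comp map_take; congr take; apply: eq_map => i /=.
  case: ifP => hi; first by rewrite nth_cat hWF /s hi.
  rewrite [RHS]nth_default; last by rewrite hWF /s leqNgt hi.
  by rewrite nth_default // size_cat hWF size_wires hx /s; lia.
case: (outs Cb) hob => [|o [|]] //= _.
by rewrite -/s -hWF nth_shift.
Qed.

Lemma gsz n m (hnm : (n <= m)%N) (t : m.-tuple bool) r : size (rcons (take n t) r) == n.+1.
Proof. by rewrite size_rcons size_takel ?size_tuple. Qed.

Lemma dir2 (m : nat -> nat) (f : forall n, n.-tuple bool -> (m n).-tuple bool)
      (b : forall n, n.-tuple bool -> bool) :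
  (forall n, (n <= m n)%N) -> poly_computable f -> super_core f b ->
  exists g : forall n, n.-tuple bool -> (n.+1).-tuple bool, super_bit g.
Proof.
move=> hm [Cf [[cf [kf hCf]] hf]] [[Cb [[cb [kb hCb]] hb]] hnot].
pose g := fun n (x : n.-tuple bool) => (Tuple (gsz (hm n) (f n x) (b n x)) : n.+1.-tuple bool).
have hob : forall n, size (outs (Cb n)) = 1%N.
  by move=> n; have := congr1 size (hb n [tuple of nseq n false]); rewrite /eval size_map.
exists g; split.
  exists (fun n => Gcirc n (Cf n) (Cb n)); split.
    exists (4 * (2 * (cf + cb)) + 6)%N, (kf + kb + 1)%N => n.
    apply: leq_trans (pb_lin2 _ _ n).
    have h1 := leq_trans (hCf n) (pb_mono cf kf cb kb n).
    have h2 := leq_trans (hCb n) (pb_mono cb kb cf kf n).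
    rewrite (addnC cb) (addnC kb) in h2.
    move: h1 h2; rewrite /csize /= size_cat /basegates size_cat !size_map size_iota size_cat size_map /=.
    have := geq_minr n (size (outs (Cf n))); rewrite -size_take_min.
    move: (pbound _ _ n) => P; lia.
  move=> n x; rewrite Gcirc_ok ?size_tuple ?hob //.
  by rewrite hf hb /= cats1.
move=> D hD c k hc.
apply: NNPP => hno; apply: hnot.
exists (Afam m D false false), (Afam m D true true), (2 * c)%N, k.
split; first exact: nd_poly_Afam.
split; first exact: nd_poly_Afam.
split; first by rewrite muln_gt0.
move=> N.
have [n hn hge] : exists2 n, (N <= n)%N &
    ~ (prob n.+1 (fun y => nd_out D n (tval y)) - prob n (fun x => nd_out D n (tval (g n x)))
       < 1 / (pbound c k n)%:R).
  apply: NNPP => H; apply: hno; exists N => n hn; apply: NNPP => H'; apply: H; exists n => //.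
exists n => //.
pose dz (r : bool) (z : seq bool) := nd_out D n (rcons z r).
have eA1 : forall y : (m n).-tuple bool, nd_out (Afam m D false false) n y = dz false (take n y).
  move=> y; rewrite /dz /nd_out /=; apply: eq_existsb => u.
  by rewrite Acirc_ok ?size_tuple ?hm // addbF.
have eA2 : forall y : (m n).-tuple bool, co_out (Afam m D true true) n y = ~~ dz true (take n y).
  move=> y; rewrite /dz /co_out /nd_out /= negb_exists; apply: eq_forallb => u.
  by rewrite Acirc_ok ?size_tuple ?hm // addbT.
have u1 : prob (m n) (fun y : (m n).-tuple bool => nd_out (Afam m D false false) n y) =
          prob n (fun z : n.-tuple bool => dz false z).
  by rewrite (prob_ext eA1) (prob_take (dz false) (hm n)).
have u2 : prob (m n) (fun y : (m n).-tuple bool => ~~ co_out (Afam m D true true) n y) =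
          prob n (fun z : n.-tuple bool => dz true z).
  rewrite (@prob_ext _ _ (fun y : (m n).-tuple bool => dz true (take n y))).
    exact: (prob_take (dz true) (hm n)).
  by move=> y; rewrite eA2 negbK.
have v1 : prob n (fun x : n.-tuple bool => ~~ nd_out (Afam m D false false) n (f n x) && ~~ b n x) =
          prob n (fun x : n.-tuple bool => ~~ b n x && ~~ dz false (take n (f n x))).
  by apply: prob_ext => x; rewrite eA1 andbC.
have v2 : prob n (fun x : n.-tuple bool => co_out (Afam m D true true) n (f n x) && b n x) =
          prob n (fun x : n.-tuple bool => b n x && ~~ dz true (take n (f n x))).
  by apply: prob_ext => x; rewrite eA2 andbC.
have w1 : prob n.+1 (fun y : (n.+1).-tuple bool => nd_out D n y) =
   (prob n (fun z : n.-tuple bool => dz false z) + prob n (fun z : n.-tuple bool => dz true z)) / 2.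
  exact: prob_rcons.
have w2 : prob n (fun x : n.-tuple bool => nd_out D n (g n x)) =
   prob n (fun x : n.-tuple bool => b n x && dz true (take n (f n x))) +
   prob n (fun x : n.-tuple bool => ~~ b n x && dz false (take n (f n x))).
  rewrite (prob_split _ (fun x => b n x)).
  congr (_ + _); apply: prob_ext => x /=; rewrite /dz; case: (b n x) => //=; by rewrite andbC.
have w3 := prob_split (fun x : n.-tuple bool => b n x) (fun x => dz true (take n (f n x))).
have w4 := prob_split (fun x : n.-tuple bool => ~~ b n x) (fun x => dz false (take n (f n x))).
have w5 := probN (fun x : n.-tuple bool => b n x).
have hpos : (0 < pbound c k n)%N by rewrite /pbound addn_gt0 hc orbT.
have e2 : 1 / (pbound (2 * c) k n)%:R = 1 / (pbound c k n)%:R / 2 :> rat.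
  have -> : pbound (2 * c) k n = (2 * pbound c k n)%N by rewrite /pbound mulnDr mulnA.
  rewrite natrM; field; rewrite pnatr_eq0 -lt0n hpos //.
rewrite e2 v1 v2 u1 u2.
move/negP: hge; rewrite -leNgt w1 w2 => hge.
set e := 1 / (pbound c k n)%:R in e2 hge *.
case: (boolP (1 / 2 + e / 2 <= prob n (fun x : n.-tuple bool => ~~ b n x && ~~ dz false (take n (f n x))) +
   1 / 2 * prob n (fun z : n.-tuple bool => dz false z))) => h; [by left | right].
rewrite -ltNge in h.
simpl in w3, w4, w5.
lra.
Qed.

Local Close Scope ring_scope.

Theorem theorem6p6 :
  (exists (m : nat -> nat) (f : forall n, n.-tuple bool -> (m n).-tuple bool)
          (b : forall n, n.-tuple bool -> bool),
      (forall n, n <= m n) /\ poly_computable f /\ super_core f b)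
  <->
  (exists g : forall n, n.-tuple bool -> (n.+1).-tuple bool, super_bit g).
Proof.
split.
  by move=> [m [f [b [hm [hf hc]]]]]; apply: (dir2 hm hf hc).
by move=> [g hg]; exact: (dir1 hg).
Qed.
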